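(* Let $c_1,c_2\in\mathbb{R}$ with $c_1c_2=0$ and $c:=\max\{|c_1|,|c_2|\}\neq0$. Let $c_{2k-1}=c_1$, $c_{2k}=c_2$ for $k\in\mathbb{N}$, and let $J$ be the self-adjoint operator in $l^2(\mathbb{N})$ given by the (block-diagonal) matrix with diagonal entries $q_n=n$ and off-diagonal entries $\lambda_n=c_nn$, i.e. $(Ju)_1=u_1+c_1u_2$, $(Ju)_n=\lambda_{n-1}u_{n-1}+nu_n+\lambda_nu_{n+1}$ for $n\ge2$, on its natural domain $\{u\in l^2(\mathbb{N}):Ju\in l^2(\mathbb{N})\}$. Then $\sigma(J)$ is the closure of the set of eigenvalues of $J$, and this set of eigenvalues is $$\{\lambda_n^+,\lambda_n^-:\ n\in\mathbb{N}\}\ \text{ if } c_1\neq0,\ c_2=0,\qquad \{1\}\cup\{\tilde\lambda_n^+,\tilde\lambda_n^-:\ n\ge2\}\ \text{ if } c_1=0,\ c_2\neq0,$$ where $\lambda_n^{\pm}=\frac{4n-1\pm\sqrt{4c^2(2n-1)^2+1}}{2}$ and $\tilde\lambda_n^{\pm}=\frac{4n-3\pm\sqrt{4c^2(2n-2)^2+1}}{2}$, and as $n\to\infty$: $$\lambda_n^+,\ \tilde\lambda_n^+=2(1+c)n+O(1),$$ $$\lambda_n^-=2(1-c)n+\left(c-\tfrac12\right)-\frac1{16cn}+O\left(\tfrac1{n^2}\right),$$ $$\tilde\lambda_n^-=2(1-c)n+\left(2c-\tfrac32\right)-\frac1{16cn}+O\left(\tfrac1{n^2}\right).$$ *)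

(* Defs.v *)
From Stdlib Require Import Reals.
From Coquelicot Require Import Coquelicot.
Open Scope R_scope.

(* Sequences in l^2(N) over C.  N = {1,2,...}; index k : nat stands for n = k+1. *)
Definition l2 (u : nat -> C) : Prop := ex_series (fun k => (Cmod (u k)) ^ 2).
Definition l2norm2 (u : nat -> C) : R := Series (fun k => (Cmod (u k)) ^ 2).

(* c_n = c1 for n odd, c2 for n even (n = k+1) *)
Definition cseq (c1 c2 : R) (k : nat) : R := if Nat.even k then c1 else c2.
Definition qn (k : nat) : R := INR (S k).
Definition lam (c1 c2 : R) (k : nat) : R := cseq c1 c2 k * INR (S k).

Definition Jop (c1 c2 : R) (u : nat -> C) (k : nat) : C :=
  Cplus (Cplus (match k with O => RtoC 0 | S j => Cmult (RtoC (lam c1 c2 j)) (u j) end)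
               (Cmult (RtoC (qn k)) (u k)))
        (Cmult (RtoC (lam c1 c2 k)) (u (S k))).

Definition Jdom (c1 c2 : R) (u : nat -> C) : Prop := l2 u /\ l2 (Jop c1 c2 u).

Definition Jshift (c1 c2 : R) (z : C) (u : nat -> C) (k : nat) : C :=
  Cminus (Jop c1 c2 u k) (Cmult z (u k)).

Definition in_resolvent (c1 c2 : R) (z : C) : Prop :=
  (forall f, l2 f -> exists! u, Jdom c1 c2 u /\ forall k, Jshift c1 c2 z u k = f k) /\
  (exists K : R, forall u, Jdom c1 c2 u -> l2norm2 u <= K * l2norm2 (Jshift c1 c2 z u)).

Definition spectrum (c1 c2 : R) (z : C) : Prop := ~ in_resolvent c1 c2 z.

Definition eigenvalue (c1 c2 : R) (z : C) : Prop :=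
  exists u, Jdom c1 c2 u /\ (exists k, u k <> RtoC 0) /\
            forall k, Jop c1 c2 u k = Cmult z (u k).

Definition closureC (E : C -> Prop) (z : C) : Prop :=
  forall eps : R, 0 < eps -> exists w, E w /\ Cmod (Cminus z w) < eps.

(* explicit eigenvalues, n : nat is the actual index n *)
Definition lamp (c : R) (n : nat) : R :=
  (4 * INR n - 1 + sqrt (4 * c ^ 2 * (2 * INR n - 1) ^ 2 + 1)) / 2.
Definition lamm (c : R) (n : nat) : R :=
  (4 * INR n - 1 - sqrt (4 * c ^ 2 * (2 * INR n - 1) ^ 2 + 1)) / 2.
Definition tlamp (c : R) (n : nat) : R :=
  (4 * INR n - 3 + sqrt (4 * c ^ 2 * (2 * INR n - 2) ^ 2 + 1)) / 2.
Definition tlamm (c : R) (n : nat) : R :=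
  (4 * INR n - 3 - sqrt (4 * c ^ 2 * (2 * INR n - 2) ^ 2 + 1)) / 2.

Definition bigO_seq (f g h : nat -> R) : Prop :=
  exists M N0, forall n, (N0 <= n)%nat -> Rabs (f n - g n) <= M * Rabs (h n).

(* Main.v *)
Require Import Defs.
From Stdlib Require Import Reals Lra Lia FunctionalExtensionality Classical.
From Coquelicot Require Import Coquelicot.
Open Scope R_scope.

Definition HLc (c1 c2 : R) (a : nat) : Prop := a = 0%nat \/ lam c1 c2 (pred a) = 0.

Lemma Jop_blk1 c1 c2 w a : HLc c1 c2 a ->
  Jop c1 c2 w a = Cplus (Cmult (RtoC (qn a)) (w a)) (Cmult (RtoC (lam c1 c2 a)) (w (S a))).
Proof.
  intros H. unfold Jop. destruct a as [|j].
  - ring.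
  - destruct H as [H|H]; [discriminate|]. simpl in H. rewrite H. ring.
Qed.

Lemma Jop_blk2 c1 c2 w a : lam c1 c2 (S a) = 0 ->
  Jop c1 c2 w (S a) = Cplus (Cmult (RtoC (lam c1 c2 a)) (w a)) (Cmult (RtoC (qn (S a))) (w (S a))).
Proof.
  intros H. unfold Jop. rewrite H. ring.
Qed.

Lemma Jop_sing c1 c2 w : lam c1 c2 0 = 0 -> Jop c1 c2 w 0%nat = w 0%nat.
Proof.
  intros H. unfold Jop. rewrite H. unfold qn. simpl INR. ring.
Qed.

Lemma Jshift_lin c1 c2 z u v k :
  Jshift c1 c2 z (fun j => Cminus (u j) (v j)) k =
  Cminus (Jshift c1 c2 z u k) (Jshift c1 c2 z v k).
Proof. unfold Jshift, Jop. destruct k; ring. Qed.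

Definition mup (p r b : R) := (p + r + sqrt ((p - r) ^ 2 + 4 * b ^ 2)) / 2.
Definition mum (p r b : R) := (p + r - sqrt ((p - r) ^ 2 + 4 * b ^ 2)) / 2.

Lemma mu_sum p r b : mup p r b + mum p r b = p + r.
Proof. unfold mup, mum. field. Qed.
Lemma mu_prod p r b : mup p r b * mum p r b = p * r - b ^ 2.
Proof.
  unfold mup, mum.
  assert (HS : sqrt ((p - r) ^ 2 + 4 * b ^ 2) * sqrt ((p - r) ^ 2 + 4 * b ^ 2) = (p - r) ^ 2 + 4 * b ^ 2)
    by (apply sqrt_sqrt; generalize (pow2_ge_0 (p-r)) (pow2_ge_0 b); lra).
  set (S := sqrt ((p - r) ^ 2 + 4 * b ^ 2)) in *.
  replace ((p + r + S) / 2 * ((p + r - S) / 2)) with (((p+r)^2 - S * S)/4) by field.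
  rewrite HS. field.
Qed.

Lemma mu_root p r b mu : mu = mup p r b \/ mu = mum p r b ->
  mu * mu - (p + r) * mu + (p * r - b ^ 2) = 0.
Proof.
  intros H. rewrite <- (mu_sum p r b), <- (mu_prod p r b).
  destruct H; subst; ring.
Qed.

Lemma psd2 (N11 N12 N22 s1 s2 : R) : 0 <= N11 + N22 -> 0 <= N11 * N22 - N12 ^ 2 ->
  0 <= N11 * s1 ^ 2 + 2 * N12 * s1 * s2 + N22 * s2 ^ 2.
Proof.
  intros H1 H2.
  assert (HN11 : 0 <= N11) by nra.
  assert (HN22 : 0 <= N22) by nra.
  destruct (Req_dec N11 0) as [E|E].
  - subst. assert (N12 = 0) by nra. subst. nra.
  - assert (0 < N11) by lra.
    assert (0 <= N11 * (N11 * s1 ^ 2 + 2 * N12 * s1 * s2 + N22 * s2 ^ 2)).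
    { replace (N11 * (N11 * s1 ^ 2 + 2 * N12 * s1 * s2 + N22 * s2 ^ 2)) with
        ((N11 * s1 + N12 * s2)^2 + (N11 * N22 - N12^2) * s2^2) by ring.
      apply Rplus_le_le_0_compat; [apply pow2_ge_0| apply Rmult_le_pos; [lra|apply pow2_ge_0]]. }
    apply (Rmult_le_reg_l N11); lra.
Qed.

Lemma quad (P R b a1 a2 m s1 s2 : R) : a1 + a2 = P + R -> a1 * a2 = P * R - b ^ 2 ->
  m <= a1 ^ 2 -> m <= a2 ^ 2 ->
  m * (s1 ^ 2 + s2 ^ 2) <= (P * s1 + b * s2) ^ 2 + (b * s1 + R * s2) ^ 2.
Proof.
  intros Hs Hp H1 H2.
  assert (0 <= (P^2+b^2-m) * s1 ^ 2 + 2 * (b*(P+R)) * s1 * s2 + (R^2+b^2-m) * s2 ^ 2).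
  { apply psd2.
    - assert (P^2+b^2-m + (R^2+b^2-m) = (a1+a2)^2 - 2*(a1*a2) - 2*m) by (rewrite Hs, Hp; ring).
      nra.
    - assert ((P ^ 2 + b ^ 2 - m) * (R ^ 2 + b ^ 2 - m) - (b * (P + R)) ^ 2
        = (a1*a2)^2 - m*((a1+a2)^2 - 2*(a1*a2)) + m^2) by (rewrite Hs, Hp; ring).
      assert ((a1*a2)^2 - m*((a1+a2)^2 - 2*(a1*a2)) + m^2 = (a1^2-m)*(a2^2-m)) by ring.
      nra. }
  assert ((P * s1 + b * s2) ^ 2 + (b * s1 + R * s2) ^ 2 - m * (s1 ^ 2 + s2 ^ 2) =
    (P^2+b^2-m) * s1 ^ 2 + 2 * (b*(P+R)) * s1 * s2 + (R^2+b^2-m) * s2 ^ 2) by ring.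
  lra.
Qed.

Lemma Cmod2 (w : C) : Cmod w ^ 2 = fst w ^ 2 + snd w ^ 2.
Proof. rewrite Cmod2_alt. reflexivity. Qed.

Lemma blk2 (p r b eps : R) (z v1 v2 : C) : 0 < eps ->
  eps <= Cmod (Cminus z (RtoC ((p + r + sqrt ((p - r) ^ 2 + 4 * b ^ 2)) / 2))) ->
  eps <= Cmod (Cminus z (RtoC ((p + r - sqrt ((p - r) ^ 2 + 4 * b ^ 2)) / 2))) ->
  eps ^ 2 * (Cmod v1 ^ 2 + Cmod v2 ^ 2) <=
  Cmod (Cplus (Cmult (Cminus (RtoC p) z) v1) (Cmult (RtoC b) v2)) ^ 2 +
  Cmod (Cplus (Cmult (RtoC b) v1) (Cmult (Cminus (RtoC r) z) v2)) ^ 2.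
Proof.
  intros He H1 H2.
  set (S := sqrt ((p - r) ^ 2 + 4 * b ^ 2)) in *.
  assert (HS : S * S = (p - r) ^ 2 + 4 * b ^ 2) by (apply sqrt_sqrt; generalize (pow2_ge_0 (p-r)) (pow2_ge_0 b); lra).
  assert (E1 : eps ^ 2 <= Cmod (Cminus z (RtoC ((p + r + S) / 2))) ^ 2)
    by (apply pow_incr; lra).
  assert (E2 : eps ^ 2 <= Cmod (Cminus z (RtoC ((p + r - S) / 2))) ^ 2)
    by (apply pow_incr; lra).
  rewrite !Cmod2 in *.
  destruct z as [x y]; destruct v1 as [s1 t1]; destruct v2 as [s2 t2].
  simpl in *.
  set (a1 := (p + r + S) / 2 - x) in *.
  set (a2 := (p + r - S) / 2 - x) in *.
  assert (Hs : a1 + a2 = (p - x) + (r - x)) by (unfold a1, a2; field).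
  assert (Hp : a1 * a2 = (p - x) * (r - x) - b ^ 2).
  { unfold a1, a2. replace ((p + r + S) / 2 - x) with ((p + r - 2*x + S)/2) by field.
    replace ((p + r - S) / 2 - x) with ((p + r - 2*x - S)/2) by field.
    replace (((p + r - 2 * x + S) / 2) * ((p + r - 2 * x - S) / 2)) with
      (((p + r - 2*x)^2 - S*S)/4) by field. rewrite HS. field. }
  assert (Q1 := quad (p-x) (r-x) b a1 a2 (eps^2 - y^2) s1 s2 Hs Hp).
  assert (Q2 := quad (p-x) (r-x) b a1 a2 (eps^2 - y^2) t1 t2 Hs Hp).
  assert (A1 : eps^2 - y^2 <= a1^2).
  { assert (eps^2 <= a1^2 + y^2); [|lra]. unfold a1.
    replace (eps^2) with (eps*(eps*1)) by ring. eapply Rle_trans; [exact E1| right; ring]. }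
  assert (A2 : eps^2 - y^2 <= a2^2).
  { assert (eps^2 <= a2^2 + y^2); [|lra]. unfold a2.
    replace (eps^2) with (eps*(eps*1)) by ring. eapply Rle_trans; [exact E2| right; ring]. }
  specialize (Q1 A1 A2). specialize (Q2 A1 A2).
  match goal with |- ?L <= ?R =>
    assert (R - L = (((p - x) * s1 + b * s2) ^ 2 + (b * s1 + (r - x) * s2) ^ 2
       - (eps ^ 2 - y ^ 2) * (s1 ^ 2 + s2 ^ 2)) +
       (((p - x) * t1 + b * t2) ^ 2 + (b * t1 + (r - x) * t2) ^ 2
       - (eps ^ 2 - y ^ 2) * (t1 ^ 2 + t2 ^ 2))) by ring end.
  lra.
Qed.

Lemma ex_series_scalR (c : R) (a : nat -> R) : ex_series a -> ex_series (fun n => c * a n).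
Proof. intros. apply (ex_series_scal_l c a); auto. Qed.

Lemma ex_series_zero : ex_series (fun _ : nat => 0).
Proof.
  apply ex_series_ext with (fun n => 0 * ((/2)^n)).
  - intros n. apply Rmult_0_l.
  - apply ex_series_scalR. apply ex_series_geom. rewrite Rabs_pos_eq; lra.
Qed.

Lemma ex_series_fin (a : nat -> R) (N : nat) :
  (forall k, (N <= k)%nat -> a k = 0) -> ex_series a.
Proof.
  intros H. apply (ex_series_incr_n a N).
  apply ex_series_ext with (fun _ => 0).
  - intros n. rewrite H; auto. lia.
  - apply ex_series_zero.
Qed.

Lemma ex_series_le_R (a b : nat -> R) :
  (forall n, 0 <= a n <= b n) -> ex_series b -> ex_series a.
Proof.
  intros H Hb. apply (ex_series_le (K:=R_AbsRing) (V:=R_CompleteNormedModule) a b); auto.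
  intros n. change (norm (a n)) with (Rabs (a n)). rewrite Rabs_pos_eq by apply H. apply H.
Qed.

Lemma ex_series_plusR (a b : nat -> R) : ex_series a -> ex_series b -> ex_series (fun n => a n + b n).
Proof. intros. apply (ex_series_plus a b); auto. Qed.

Lemma sum_ge_term (a : nat -> R) (k : nat) : (forall n, 0 <= a n) -> a k <= sum_f_R0 a k.
Proof.
  intros H. destruct k; simpl. lra.
  assert (0 <= sum_f_R0 a k).
  { induction k; simpl. apply H. specialize (H (S k)). lra. }
  lra.
Qed.

Lemma Series_ge0 (a : nat -> R) : (forall n, 0 <= a n) -> ex_series a -> 0 <= Series a.
Proof.
  intros H Ha. assert (E := Series_le (fun _ => 0) a).
  assert (Z : Series (fun _ : nat => 0) = 0).
  { rewrite (Series_ext (fun _ => 0) (fun n => 0 * a n)) by (intros; ring).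
    rewrite Series_scal_l. ring. }
  rewrite Z in E. apply E; auto. intros n; split; [lra | apply H].
Qed.

Lemma Series_ge_term (a : nat -> R) (k : nat) : (forall n, 0 <= a n) -> ex_series a -> a k <= Series a.
Proof.
  intros H Ha. rewrite (Series_incr_n a (S k)) by (auto; lia). simpl pred.
  assert (0 <= Series (fun j => a (S k + j)%nat)).
  { apply Series_ge0. intros; apply H. apply (ex_series_incr_n a (S k)). auto. }
  assert (Hs := sum_ge_term a k H). lra.
Qed.

Lemma Cmod2_ge0 (w : C) : 0 <= Cmod w ^ 2.
Proof. apply pow2_ge_0. Qed.

Lemma Cmod2_plus_le (u v : C) : Cmod (Cplus u v) ^ 2 <= 2 * Cmod u ^ 2 + 2 * Cmod v ^ 2.
Proof.
  rewrite !Cmod2_alt. destruct u, v. simpl.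
  generalize (pow2_ge_0 (r - r1)) (pow2_ge_0 (r0 - r2)). intros. nra.
Qed.

Lemma Cmod2_mult (u v : C) : Cmod (Cmult u v) ^ 2 = Cmod u ^ 2 * Cmod v ^ 2.
Proof. rewrite Cmod_mult. ring. Qed.

Lemma l2_plus u v : l2 u -> l2 v -> l2 (fun k => Cplus (u k) (v k)).
Proof.
  unfold l2. intros Hu Hv.
  apply ex_series_le_R with (fun k => 2 * Cmod (u k) ^ 2 + 2 * Cmod (v k) ^ 2).
  - intros n; split; [apply Cmod2_ge0 | apply Cmod2_plus_le].
  - apply ex_series_plusR; apply ex_series_scalR; auto.
Qed.

Lemma l2_scal (a : C) u : l2 u -> l2 (fun k => Cmult a (u k)).
Proof.
  unfold l2. intros Hu.
  apply ex_series_ext with (fun k => Cmod a ^ 2 * Cmod (u k) ^ 2).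
  - intros; rewrite Cmod2_mult; auto.
  - apply ex_series_scalR; auto.
Qed.

Lemma l2_ext u v : (forall k, u k = v k) -> l2 u -> l2 v.
Proof. unfold l2. intros H Hu. apply ex_series_ext with (fun k => Cmod (u k) ^ 2); auto.
  intros; rewrite H; auto. Qed.

Lemma RtoC_neq0 (b : R) : b <> 0 -> RtoC b <> RtoC 0.
Proof. intros H E. apply H. injection E. auto. Qed.

Lemma L_eig c1 c2 a mu : HLc c1 c2 a -> lam c1 c2 (S a) = 0 -> lam c1 c2 a <> 0 ->
  mu * mu - (qn a + qn (S a)) * mu + (qn a * qn (S a) - lam c1 c2 a ^ 2) = 0 ->
  eigenvalue c1 c2 (RtoC mu).
Proof.
  intros HL HR Hb Hmu.
  set (p := qn a) in *. set (r := qn (S a)) in *. set (b := lam c1 c2 a) in *.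
  set (v := fun k => if Nat.eqb k a then RtoC b else if Nat.eqb k (S a) then RtoC (mu - p) else RtoC 0).
  assert (Hv0 : forall k, k <> a -> k <> S a -> v k = RtoC 0).
  { intros k H1 H2. unfold v. destruct (Nat.eqb_spec k a); [congruence|].
    destruct (Nat.eqb_spec k (S a)); [congruence|]. auto. }
  assert (Hva : v a = RtoC b) by (unfold v; rewrite Nat.eqb_refl; auto).
  assert (HvSa : v (S a) = RtoC (mu - p)).
  { unfold v. destruct (Nat.eqb_spec (S a) a); [lia|]. rewrite Nat.eqb_refl; auto. }
  assert (HJ : forall k, Jop c1 c2 v k = Cmult (RtoC mu) (v k)).
  { intros k. destruct (Nat.eq_dec k a) as [->|Ka].
    - rewrite Jop_blk1 by auto. rewrite Hva, HvSa. fold p b.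
      apply injective_projections; simpl; ring.
    - destruct (Nat.eq_dec k (S a)) as [->|KSa].
      + rewrite Jop_blk2 by auto. rewrite Hva, HvSa. fold r b.
        apply injective_projections; simpl; nra.
      + rewrite (Hv0 k Ka KSa). unfold Jop.
        assert (T1 : Cmult (RtoC (lam c1 c2 k)) (v (S k)) = RtoC 0).
        { destruct (Nat.eq_dec (S k) a) as [E|E].
          - destruct HL as [HL|HL]; [lia|]. rewrite <- E in HL. simpl in HL. rewrite HL. ring.
          - rewrite (Hv0 (S k)) by lia. ring. }
        assert (T2 : match k with O => RtoC 0 | S j => Cmult (RtoC (lam c1 c2 j)) (v j) end = RtoC 0).
        { destruct k as [|j]. auto.
          destruct (Nat.eq_dec j (S a)) as [E|E].
          - rewrite E, HR. ring.
          - rewrite (Hv0 j) by lia. ring. }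
        rewrite T1, T2, (Hv0 k Ka KSa). ring. }
  assert (Hl2 : l2 v).
  { unfold l2. apply ex_series_fin with (S (S a)). intros k Hk.
    rewrite Hv0 by lia. rewrite Cmod_0. ring. }
  exists v. split; [split|split].
  - auto.
  - apply l2_ext with (fun k => Cmult (RtoC mu) (v k)). intros; auto.
    apply l2_scal; auto.
  - exists a. rewrite Hva. apply RtoC_neq0; auto.
  - auto.
Qed.

Lemma L_sing c1 c2 : lam c1 c2 0 = 0 -> eigenvalue c1 c2 (RtoC 1).
Proof.
  intros H0.
  set (v := fun k => if Nat.eqb k 0 then RtoC 1 else RtoC 0).
  assert (HJ : forall k, Jop c1 c2 v k = Cmult (RtoC 1) (v k)).
  { intros k. destruct k as [|k].
    - rewrite Jop_sing by auto. ring.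
    - unfold Jop. unfold v. simpl. destruct k as [|j].
      + simpl. rewrite H0. ring.
      + simpl. ring. }
  assert (Hl2 : l2 v).
  { unfold l2. apply ex_series_fin with 1%nat. intros k Hk.
    unfold v. destruct (Nat.eqb_spec k 0); [lia|]. rewrite Cmod_0. ring. }
  exists v. split; [split|split].
  - auto.
  - apply l2_ext with (fun k => Cmult (RtoC 1) (v k)). intros; auto.
    apply l2_scal; auto.
  - exists 0%nat. simpl. apply RtoC_neq0; lra.
  - auto.
Qed.

Lemma Jshift_blk1 c1 c2 z w a : HLc c1 c2 a ->
  Jshift c1 c2 z w a = Cplus (Cmult (Cminus (RtoC (qn a)) z) (w a)) (Cmult (RtoC (lam c1 c2 a)) (w (S a))).
Proof. intros H. unfold Jshift. rewrite Jop_blk1 by auto. ring. Qed.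

Lemma Jshift_blk2 c1 c2 z w a : lam c1 c2 (S a) = 0 ->
  Jshift c1 c2 z w (S a) = Cplus (Cmult (RtoC (lam c1 c2 a)) (w a)) (Cmult (Cminus (RtoC (qn (S a))) z) (w (S a))).
Proof. intros H. unfold Jshift. rewrite Jop_blk2 by auto. ring. Qed.

Lemma Jshift_sing c1 c2 z w : lam c1 c2 0 = 0 ->
  Jshift c1 c2 z w 0%nat = Cmult (Cminus (RtoC 1) z) (w 0%nat).
Proof. intros H. unfold Jshift. rewrite Jop_sing by auto. ring. Qed.

Lemma JB c1 c2 a z w eps : HLc c1 c2 a -> lam c1 c2 (S a) = 0 -> 0 < eps ->
  eps <= Cmod (Cminus z (RtoC (mup (qn a) (qn (S a)) (lam c1 c2 a)))) ->
  eps <= Cmod (Cminus z (RtoC (mum (qn a) (qn (S a)) (lam c1 c2 a)))) ->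
  eps ^ 2 * (Cmod (w a) ^ 2 + Cmod (w (S a)) ^ 2) <=
  Cmod (Jshift c1 c2 z w a) ^ 2 + Cmod (Jshift c1 c2 z w (S a)) ^ 2.
Proof.
  intros HL HR He H1 H2. rewrite Jshift_blk1, Jshift_blk2 by auto.
  apply blk2; auto.
Qed.

Definition Blocks c1 c2 := forall k,
  (exists a, (k = a \/ k = S a) /\ HLc c1 c2 a /\ lam c1 c2 (S a) = 0 /\ lam c1 c2 a <> 0) \/
  (k = 0%nat /\ lam c1 c2 0 = 0).

Definition Gs (g : nat -> C) (k : nat) : R :=
  Cmod (g k) ^ 2 + Cmod (g (S k)) ^ 2 + match k with O => 0 | S j => Cmod (g j) ^ 2 end.

Lemma Gs_ge g k : 0 <= Gs g k.
Proof.
  unfold Gs. generalize (Cmod2_ge0 (g k)) (Cmod2_ge0 (g (S k))). intros.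
  destruct k; [lra|]. generalize (Cmod2_ge0 (g k)). lra.
Qed.

Lemma mu_eig c1 c2 a : HLc c1 c2 a -> lam c1 c2 (S a) = 0 -> lam c1 c2 a <> 0 ->
  eigenvalue c1 c2 (RtoC (mup (qn a) (qn (S a)) (lam c1 c2 a))) /\
  eigenvalue c1 c2 (RtoC (mum (qn a) (qn (S a)) (lam c1 c2 a))).
Proof.
  intros. split; apply (L_eig c1 c2 a); auto; apply mu_root; [left|right]; reflexivity.
Qed.

Lemma PB c1 c2 z eps : Blocks c1 c2 -> 0 < eps ->
  (forall w, eigenvalue c1 c2 w -> eps <= Cmod (Cminus z w)) ->
  forall u k, eps ^ 2 * Cmod (u k) ^ 2 <= Gs (Jshift c1 c2 z u) k.
Proof.
  intros HB He Hw u k.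
  destruct (HB k) as [[a [Hk [HL [HR Hb]]]] | [Hk H0]].
  - destruct (mu_eig c1 c2 a HL HR Hb) as [E1 E2].
    assert (J := JB c1 c2 a z u eps HL HR He (Hw _ E1) (Hw _ E2)).
    generalize (Cmod2_ge0 (u a)) (Cmod2_ge0 (u (S a))) (pow2_ge_0 eps). intros.
    unfold Gs. destruct Hk as [->| ->].
    + assert (0 <= match a with O => 0 | S j => Cmod (Jshift c1 c2 z u j) ^ 2 end).
      { destruct a; [lra| apply Cmod2_ge0]. }
      generalize (Cmod2_ge0 (u a)). nra.
    + generalize (Cmod2_ge0 (Jshift c1 c2 z u (S (S a)))). nra.
  - subst k. assert (E := Hw _ (L_sing c1 c2 H0)).
    unfold Gs. rewrite Jshift_sing by auto. rewrite Cmod2_mult.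
    replace (Cminus (RtoC 1) z) with (Copp (Cminus z (RtoC 1))) by ring.
    rewrite Cmod_opp.
    assert (eps ^ 2 <= Cmod (Cminus z (RtoC 1)) ^ 2) by (apply pow_incr; lra).
    generalize (Cmod2_ge0 (u 0%nat)) (Cmod2_ge0 (Jshift c1 c2 z u 1%nat)). intros.
    nra.
Qed.

Lemma eig_fwd c1 c2 z : Blocks c1 c2 -> eigenvalue c1 c2 z ->
  (exists a, HLc c1 c2 a /\ lam c1 c2 (S a) = 0 /\ lam c1 c2 a <> 0 /\
     (z = RtoC (mup (qn a) (qn (S a)) (lam c1 c2 a)) \/ z = RtoC (mum (qn a) (qn (S a)) (lam c1 c2 a)))) \/
  (lam c1 c2 0 = 0 /\ z = RtoC 1).
Proof.
  intros HB [u [[Hu1 Hu2] [[k Hk] HJ]]].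
  assert (HS0 : forall j, Jshift c1 c2 z u j = RtoC 0).
  { intros j. unfold Jshift. rewrite HJ. ring. }
  destruct (HB k) as [[a [Hka [HL [HR Hb]]]] | [Hk0 H0]].
  - left. exists a. repeat split; auto.
    set (m1 := RtoC (mup (qn a) (qn (S a)) (lam c1 c2 a))).
    set (m2 := RtoC (mum (qn a) (qn (S a)) (lam c1 c2 a))).
    destruct (classic (z = m1)) as [|N1]; [auto|].
    destruct (classic (z = m2)) as [|N2]; [auto|].
    exfalso.
    assert (P1 : 0 < Cmod (Cminus z m1)).
    { apply Cmod_gt_0. intros E. apply N1. rewrite <- (Cplus_0_l m1), <- E. ring. }
    assert (P2 : 0 < Cmod (Cminus z m2)).
    { apply Cmod_gt_0. intros E. apply N2. rewrite <- (Cplus_0_l m2), <- E. ring. }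
    set (eps := Rmin (Cmod (Cminus z m1)) (Cmod (Cminus z m2))).
    assert (He : 0 < eps) by (apply Rmin_pos; auto).
    assert (J := JB c1 c2 a z u eps HL HR He (Rmin_l _ _) (Rmin_r _ _)).
    rewrite !HS0, Cmod_0 in J.
    assert (0 < eps ^ 2) by (apply pow_lt; auto).
    generalize (Cmod2_ge0 (u a)) (Cmod2_ge0 (u (S a))). intros.
    assert (Cmod (u a) ^ 2 = 0) by nra.
    assert (Cmod (u (S a)) ^ 2 = 0) by nra.
    apply Hk. destruct Hka as [->| ->]; apply Cmod_eq_0; apply NNPP; intro NZ; eapply (pow_nonzero _ 2 NZ); eauto.
  - right. split; auto. subst k.
    assert (E := HS0 0%nat). rewrite Jshift_sing in E by auto.
    destruct (classic (z = RtoC 1)) as [|N]; auto. exfalso. apply Hk.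
    apply Cmod_eq_0. assert (E' := f_equal Cmod E). rewrite Cmod_mult, Cmod_0 in E'.
    assert (0 < Cmod (Cminus (RtoC 1) z)).
    { apply Cmod_gt_0. intros E2. apply N. rewrite <- (Cplus_0_l z), <- E2. ring. }
    generalize (Cmod_ge_0 (u 0%nat)). nra.
Qed.

Definition Dl c1 c2 z k : C :=
  Cminus (Cmult (Cminus (RtoC (qn k)) z) (Cminus (RtoC (qn (S k))) z))
         (Cmult (RtoC (lam c1 c2 k)) (RtoC (lam c1 c2 k))).

Definition sol c1 c2 z (f : nat -> C) (k : nat) : C :=
  if Req_EM_T (lam c1 c2 k) 0 then
    match k with
    | O => Cdiv (f 0%nat) (Cminus (RtoC (qn 0)) z)
    | S j => if Req_EM_T (lam c1 c2 j) 0 then Cdiv (f k) (Cminus (RtoC (qn k)) z)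
             else Cdiv (Cminus (Cmult (Cminus (RtoC (qn j)) z) (f (S j))) (Cmult (RtoC (lam c1 c2 j)) (f j)))
                       (Dl c1 c2 z j)
    end
  else Cdiv (Cminus (Cmult (Cminus (RtoC (qn (S k))) z) (f k)) (Cmult (RtoC (lam c1 c2 k)) (f (S k))))
            (Dl c1 c2 z k).

Lemma Cneq_of_mod (z m : C) (eps : R) : 0 < eps -> eps <= Cmod (Cminus z m) -> Cminus z m <> RtoC 0.
Proof. intros He H E. rewrite E, Cmod_0 in H. lra. Qed.

Lemma Dl_neq c1 c2 z a eps : 0 < eps ->
  eps <= Cmod (Cminus z (RtoC (mup (qn a) (qn (S a)) (lam c1 c2 a)))) ->
  eps <= Cmod (Cminus z (RtoC (mum (qn a) (qn (S a)) (lam c1 c2 a)))) ->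
  Dl c1 c2 z a <> RtoC 0.
Proof.
  intros He H1 H2.
  set (p := qn a) in *. set (r := qn (S a)) in *. set (b := lam c1 c2 a) in *.
  assert (Hs : Cplus (RtoC p) (RtoC r) = Cplus (RtoC (mup p r b)) (RtoC (mum p r b))).
  { rewrite <- !RtoC_plus. rewrite mu_sum. auto. }
  assert (Hp : Cminus (Cmult (RtoC p) (RtoC r)) (Cmult (RtoC b) (RtoC b)) = Cmult (RtoC (mup p r b)) (RtoC (mum p r b))).
  { rewrite <- !RtoC_mult. rewrite mu_prod. rewrite <- RtoC_minus. f_equal. ring. }
  assert (E : Dl c1 c2 z a = Cmult (Cminus z (RtoC (mup p r b))) (Cminus z (RtoC (mum p r b)))).
  { unfold Dl. fold p r b.
    transitivity (Cplus (Cminus (Cmult z z) (Cmult (Cplus (RtoC p) (RtoC r)) z))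
       (Cminus (Cmult (RtoC p) (RtoC r)) (Cmult (RtoC b) (RtoC b)))); [ring|].
    rewrite Hs, Hp. ring. }
  rewrite E. apply Cmult_neq_0; eapply Cneq_of_mod; eauto.
Qed.

Lemma sol_eq c1 c2 z eps f : Blocks c1 c2 -> 0 < eps ->
  (forall w, eigenvalue c1 c2 w -> eps <= Cmod (Cminus z w)) ->
  forall k, Jshift c1 c2 z (sol c1 c2 z f) k = f k.
Proof.
  intros HB He Hw k.
  destruct (HB k) as [[a [Hk [HL [HR Hb]]]] | [Hk H0]].
  - destruct (mu_eig c1 c2 a HL HR Hb) as [E1 E2].
    assert (HD := Dl_neq c1 c2 z a eps He (Hw _ E1) (Hw _ E2)).
    assert (Ua : sol c1 c2 z f a = Cdiv (Cminus (Cmult (Cminus (RtoC (qn (S a))) z) (f a)) (Cmult (RtoC (lam c1 c2 a)) (f (S a))))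
            (Dl c1 c2 z a)).
    { unfold sol. destruct (Req_EM_T (lam c1 c2 a) 0); [contradiction|auto]. }
    assert (USa : sol c1 c2 z f (S a) = Cdiv (Cminus (Cmult (Cminus (RtoC (qn a)) z) (f (S a))) (Cmult (RtoC (lam c1 c2 a)) (f a)))
                       (Dl c1 c2 z a)).
    { unfold sol. destruct (Req_EM_T (lam c1 c2 (S a)) 0); [|contradiction].
      destruct (Req_EM_T (lam c1 c2 a) 0); [contradiction|auto]. }
    destruct Hk as [->| ->].
    + rewrite Jshift_blk1 by auto. rewrite Ua, USa. unfold Dl in *. field. auto.
    + rewrite Jshift_blk2 by auto. rewrite Ua, USa. unfold Dl in *. field. auto.
  - subst k. rewrite Jshift_sing by auto.
    assert (E := Hw _ (L_sing c1 c2 H0)).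
    assert (N : Cminus (RtoC 1) z <> RtoC 0).
    { intros N. apply (Cneq_of_mod z (RtoC 1) eps He E).
      replace (Cminus z (RtoC 1)) with (Copp (Cminus (RtoC 1) z)) by ring. rewrite N. ring. }
    unfold sol. destruct (Req_EM_T (lam c1 c2 0) 0); [|contradiction].
    unfold qn. simpl INR. field. auto.
Qed.

Definition shiftR (a : nat -> R) (k : nat) : R := match k with O => 0 | S j => a j end.

Lemma ex_shiftR a : ex_series a -> ex_series (shiftR a).
Proof. intros H. apply (proj2 (ex_series_incr_1 (shiftR a))). simpl. auto. Qed.

Lemma Series_shiftR a : Series (shiftR a) = Series a.
Proof. rewrite Series_incr_1_aux by reflexivity. reflexivity. Qed.

Lemma Gs_eq g k : Gs g k = Cmod (g k) ^ 2 + Cmod (g (S k)) ^ 2 + shiftR (fun j => Cmod (g j) ^ 2) k.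
Proof. reflexivity. Qed.

Lemma ex_Gs g : l2 g -> ex_series (Gs g).
Proof.
  unfold l2. intros H.
  apply ex_series_ext with (fun k => Cmod (g k) ^ 2 + Cmod (g (S k)) ^ 2 + shiftR (fun j => Cmod (g j) ^ 2) k).
  { intros; symmetry; apply Gs_eq. }
  apply ex_series_plusR; [apply ex_series_plusR|].
  - auto.
  - apply (proj1 (ex_series_incr_1 (fun k => Cmod (g k) ^ 2))). auto.
  - apply ex_shiftR. auto.
Qed.

Lemma Series_Gs g : l2 g -> Series (Gs g) <= 3 * l2norm2 g.
Proof.
  unfold l2, l2norm2. intros H.
  rewrite (Series_ext _ (fun k => (Cmod (g k) ^ 2 + Cmod (g (S k)) ^ 2) + shiftR (fun j => Cmod (g j) ^ 2) k))
    by (intros; apply Gs_eq).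
  assert (H1 : ex_series (fun k => Cmod (g (S k)) ^ 2)) by (apply (proj1 (ex_series_incr_1 (fun k => Cmod (g k) ^ 2))); auto).
  rewrite Series_plus; [| apply ex_series_plusR; auto | apply ex_shiftR; auto].
  rewrite Series_plus; auto.
  rewrite Series_shiftR.
  rewrite (Series_incr_1 (fun k => Cmod (g k) ^ 2)) by auto.
  generalize (Cmod2_ge0 (g 0%nat)). lra.
Qed.

Lemma l2_Jshift c1 c2 z u : Jdom c1 c2 u -> l2 (Jshift c1 c2 z u).
Proof.
  intros [H1 H2]. apply l2_ext with (fun k => Cplus (Jop c1 c2 u k) (Cmult (Copp z) (u k))).
  - intros; unfold Jshift; ring.
  - apply l2_plus; auto. apply l2_scal; auto.
Qed.

Lemma resolvent_ok c1 c2 z eps : Blocks c1 c2 -> 0 < eps ->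
  (forall w, eigenvalue c1 c2 w -> eps <= Cmod (Cminus z w)) ->
  in_resolvent c1 c2 z.
Proof.
  intros HB He Hw.
  assert (He2 : 0 < eps ^ 2) by (apply pow_lt; auto).
  assert (Hbd : forall u, l2 (Jshift c1 c2 z u) -> l2 u).
  { intros u Hg. unfold l2. apply ex_series_le_R with (fun k => / eps ^ 2 * Gs (Jshift c1 c2 z u) k).
    - intros n; split; [apply Cmod2_ge0|].
      assert (P := PB c1 c2 z eps HB He Hw u n).
      apply (Rmult_le_reg_l (eps ^ 2)); auto. field_simplify; [|lra]. lra.
    - apply ex_series_scalR. apply ex_Gs. auto. }
  split.
  - intros f Hf. exists (sol c1 c2 z f).
    assert (HS := sol_eq c1 c2 z eps f HB He Hw).
    assert (HSf : Jshift c1 c2 z (sol c1 c2 z f) = f) by (apply functional_extensionality; auto).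
    split; [split; [split|]|].
    + apply Hbd. rewrite HSf. auto.
    + apply l2_ext with (fun k => Cplus (f k) (Cmult z (sol c1 c2 z f k))).
      * intros k. rewrite <- (HS k). unfold Jshift. ring.
      * apply l2_plus; auto. apply l2_scal. apply Hbd. rewrite HSf. auto.
    + auto.
    + intros u' [Hu' HS']. apply functional_extensionality. intros k.
      set (d := fun j => Cminus (sol c1 c2 z f j) (u' j)).
      assert (Hd : Jshift c1 c2 z d = fun _ => RtoC 0).
      { apply functional_extensionality. intros j. unfold d. rewrite Jshift_lin, HS, HS'. ring. }
      assert (P := PB c1 c2 z eps HB He Hw d k). rewrite Hd in P.
      unfold Gs in P. rewrite Cmod_0 in P.
      assert (Cmod (d k) ^ 2 = 0).
      { generalize (Cmod2_ge0 (d k)). destruct k; nra. }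
      assert (Cmod (d k) = 0) by (apply NNPP; intro NZ; eapply (pow_nonzero _ 2 NZ); eauto).
      apply Cmod_eq_0 in H0. unfold d in H0.
      rewrite <- (Cplus_0_l (u' k)), <- H0. ring.
  - exists (3 / eps ^ 2). intros u Hu.
    assert (Hg := l2_Jshift c1 c2 z u Hu).
    unfold l2norm2 at 1.
    apply Rle_trans with (Series (fun k => / eps ^ 2 * Gs (Jshift c1 c2 z u) k)).
    + apply Series_le.
      * intros n; split; [apply Cmod2_ge0|].
        assert (P := PB c1 c2 z eps HB He Hw u n).
        apply (Rmult_le_reg_l (eps ^ 2)); auto. field_simplify; [|lra]. lra.
      * apply ex_series_scalR. apply ex_Gs. auto.
    + rewrite Series_scal_l. assert (T := Series_Gs _ Hg).
      replace (3 / eps ^ 2 * l2norm2 (Jshift c1 c2 z u)) with (/ eps ^ 2 * (3 * l2norm2 (Jshift c1 c2 z u))) by (field; lra).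
      apply Rmult_le_compat_l. left; apply Rinv_0_lt_compat; auto. lra.
Qed.

Lemma closure_not_res c1 c2 z : closureC (eigenvalue c1 c2) z -> ~ in_resolvent c1 c2 z.
Proof.
  intros Hc [_ [K HK]].
  set (eps := Rmin 1 (/ (Rabs K + 1))).
  assert (HK1 : 0 < Rabs K + 1) by (generalize (Rabs_pos K); lra).
  assert (He : 0 < eps) by (apply Rmin_pos; [lra| apply Rinv_0_lt_compat; auto]).
  destruct (Hc eps He) as [w [[v [[Hv1 Hv2] [[k Hk] HJ]]] Hzw]].
  assert (HS : forall j, Jshift c1 c2 z v j = Cmult (Cminus w z) (v j)).
  { intros j. unfold Jshift. rewrite HJ. ring. }
  assert (HN : l2norm2 (Jshift c1 c2 z v) = Cmod (Cminus w z) ^ 2 * l2norm2 v).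
  { unfold l2norm2. rewrite <- Series_scal_l. apply Series_ext. intros j.
    rewrite HS, Cmod2_mult. auto. }
  assert (Hpos : 0 < l2norm2 v).
  { apply Rlt_le_trans with (Cmod (v k) ^ 2).
    - apply pow_lt. apply Cmod_gt_0. auto.
    - unfold l2norm2. apply (Series_ge_term (fun j => Cmod (v j) ^ 2) k); auto. intros; apply Cmod2_ge0. }
  assert (B := HK v (conj Hv1 Hv2)). rewrite HN in B.
  assert (Hd : Cmod (Cminus w z) < eps).
  { replace (Cminus w z) with (Copp (Cminus z w)) by ring. rewrite Cmod_opp. auto. }
  set (d := Cmod (Cminus w z)) in *.
  assert (Hd0 : 0 <= d) by apply Cmod_ge_0.
  assert (E1 : eps <= 1) by apply Rmin_l.
  assert (E2 : eps <= / (Rabs K + 1)) by apply Rmin_r.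
  assert (Hdd : d ^ 2 < / (Rabs K + 1)).
  { apply Rle_lt_trans with d. simpl. nra. lra. }
  assert (Hkd : K * d ^ 2 < 1).
  { apply Rle_lt_trans with (Rabs K * d ^ 2).
    - apply Rmult_le_compat_r. apply pow2_ge_0. apply Rle_abs.
    - apply Rle_lt_trans with (Rabs K * / (Rabs K + 1)).
      + apply Rmult_le_compat_l. apply Rabs_pos. lra.
      + apply (Rmult_lt_reg_r (Rabs K + 1)); auto. rewrite Rmult_assoc, Rinv_l by lra. lra. }
  nra.
Qed.

Lemma not_closure_eps (E : C -> Prop) z : ~ closureC E z ->
  exists eps, 0 < eps /\ forall w, E w -> eps <= Cmod (Cminus z w).
Proof.
  intros H. unfold closureC in H. apply not_all_ex_not in H. destruct H as [eps H].
  exists eps. apply imply_to_and in H. destruct H as [He H]. split; auto.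
  intros w Ew. apply Rnot_lt_le. intros L. apply H. exists w. auto.
Qed.

Lemma spec_iff c1 c2 : Blocks c1 c2 -> forall z, spectrum c1 c2 z <-> closureC (eigenvalue c1 c2) z.
Proof.
  intros HB z. unfold spectrum. split.
  - intros Hs. apply NNPP. intros Hc. apply Hs.
    destruct (not_closure_eps _ _ Hc) as [eps [He Hw]].
    apply (resolvent_ok c1 c2 z eps); auto.
  - apply closure_not_res.
Qed.

Lemma lam_even c1 c2 m : lam c1 c2 (2 * m) = c1 * (2 * INR m + 1).
Proof.
  unfold lam, cseq. rewrite Nat.even_even. rewrite S_INR, mult_INR. simpl (INR 2). ring.
Qed.

Lemma lam_odd c1 c2 m : lam c1 c2 (S (2 * m)) = c2 * (2 * INR m + 2).
Proof.
  unfold lam, cseq. replace (S (2 * m)) with (2 * m + 1)%nat by lia. rewrite Nat.even_odd.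
  rewrite !S_INR, plus_INR, mult_INR. simpl (INR 2). simpl (INR 1). ring.
Qed.

Lemma qn_even m : qn (2 * m) = 2 * INR m + 1.
Proof. unfold qn. rewrite S_INR, mult_INR. simpl (INR 2). ring. Qed.
Lemma qn_odd m : qn (S (2 * m)) = 2 * INR m + 2.
Proof. unfold qn. rewrite !S_INR, mult_INR. simpl (INR 2). ring. Qed.
Lemma qn_even2 m : qn (S (S (2 * m))) = 2 * INR m + 3.
Proof. unfold qn. rewrite !S_INR, mult_INR. simpl (INR 2). ring. Qed.

Lemma even_or_odd k : exists m, k = (2 * m)%nat \/ k = S (2 * m).
Proof.
  destruct (Nat.Even_or_Odd k) as [[m Hm]|[m Hm]]; exists m; [left|right]; lia.
Qed.

Lemma blocksA c1 : c1 <> 0 -> Blocks c1 0.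
Proof.
  intros H1 k. left. destruct (even_or_odd k) as [m Hm]. exists (2 * m)%nat.
  split; [destruct Hm; auto|]. split; [|split].
  - destruct m as [|m]; [left; auto|right].
    replace (pred (2 * S m)) with (S (2 * m)) by lia. rewrite lam_odd. ring.
  - rewrite lam_odd. ring.
  - rewrite lam_even. intros E. apply Rmult_integral in E. destruct E as [E|E]; [auto|].
    generalize (pos_INR m). lra.
Qed.

Lemma lamA_ne c1 a : lam c1 0 a <> 0 -> exists m, a = (2 * m)%nat.
Proof.
  intros H. destruct (even_or_odd a) as [m [Hm|Hm]]; exists m; auto.
  subst. rewrite lam_odd in H. lra.
Qed.

Lemma muA c1 c m : c ^ 2 = c1 ^ 2 ->
  mup (qn (2 * m)) (qn (S (2 * m))) (lam c1 0 (2 * m)) = lamp c (S m) /\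
  mum (qn (2 * m)) (qn (S (2 * m))) (lam c1 0 (2 * m)) = lamm c (S m).
Proof.
  intros Hc. rewrite qn_even, qn_odd, lam_even. unfold mup, mum, lamp, lamm.
  rewrite S_INR.
  replace ((2 * INR m + 1 - (2 * INR m + 2)) ^ 2 + 4 * (c1 * (2 * INR m + 1)) ^ 2)
    with (4 * c ^ 2 * (2 * (INR m + 1) - 1) ^ 2 + 1) by (rewrite Hc; ring).
  split; field.
Qed.

Lemma eigA c1 c z : c1 <> 0 -> c ^ 2 = c1 ^ 2 ->
  (eigenvalue c1 0 z <-> exists n : nat, (1 <= n)%nat /\ (z = RtoC (lamp c n) \/ z = RtoC (lamm c n))).
Proof.
  intros H1 Hc. split.
  - intros He. destruct (eig_fwd c1 0 z (blocksA c1 H1) He) as [[a [HL [HR [Hb Hz]]]] | [H0 _]].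
    + destruct (lamA_ne c1 a Hb) as [m ->]. exists (S m). split; [lia|].
      destruct (muA c1 c m Hc) as [E1 E2]. rewrite <- E1, <- E2. auto.
    + exfalso. replace 0%nat with (2 * 0)%nat in H0 by lia. rewrite lam_even in H0.
      simpl in H0. lra.
  - intros [n [Hn Hz]]. destruct n as [|m]; [lia|].
    destruct (blocksA c1 H1 (2 * m)%nat) as [[a [Ha [HL [HR Hb]]]] | [E E']].
    + assert (a = 2 * m)%nat.
      { destruct Ha as [Ha|Ha]; auto. exfalso. destruct (lamA_ne c1 a Hb) as [m' ->]. lia. }
      subst a. destruct (mu_eig c1 0 _ HL HR Hb) as [E1 E2].
      destruct (muA c1 c m Hc) as [F1 F2]. rewrite F1 in E1. rewrite F2 in E2.
      destruct Hz as [->| ->]; auto.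
    + exfalso. replace 0%nat with (2 * 0)%nat in E' by lia. rewrite lam_even in E'.
      simpl in E'. lra.
Qed.

Lemma blocksB c2 : c2 <> 0 -> Blocks 0 c2.
Proof.
  intros H2 k.
  assert (L1 : forall m, lam 0 c2 (2 * m) = 0) by (intros; rewrite lam_even; ring).
  assert (L2 : forall m, lam 0 c2 (S (2 * m)) <> 0).
  { intros m. rewrite lam_odd. intros E. apply Rmult_integral in E. destruct E as [E|E]; [auto|].
    generalize (pos_INR m). lra. }
  destruct (even_or_odd k) as [m [Hm|Hm]].
  - destruct m as [|m].
    + right. split; auto. apply (L1 0%nat).
    + left. exists (S (2 * m)). split; [right; lia|].
      split; [right; simpl; apply L1|]. split; [|apply L2].
      replace (S (S (2 * m))) with (2 * S m)%nat by lia. apply L1.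
  - left. exists (S (2 * m)). split; [left; auto|].
    split; [right; simpl; apply L1|]. split; [|apply L2].
    replace (S (S (2 * m))) with (2 * S m)%nat by lia. apply L1.
Qed.

Lemma lamB_ne c2 a : lam 0 c2 a <> 0 -> exists m, a = S (2 * m).
Proof.
  intros H. destruct (even_or_odd a) as [m [Hm|Hm]]; exists m; auto.
  subst. rewrite lam_even in H. lra.
Qed.

Lemma muB c2 c m : c ^ 2 = c2 ^ 2 ->
  mup (qn (S (2 * m))) (qn (S (S (2 * m)))) (lam 0 c2 (S (2 * m))) = tlamp c (S (S m)) /\
  mum (qn (S (2 * m))) (qn (S (S (2 * m)))) (lam 0 c2 (S (2 * m))) = tlamm c (S (S m)).
Proof.
  intros Hc. rewrite qn_odd, qn_even2, lam_odd. unfold mup, mum, tlamp, tlamm.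
  rewrite !S_INR.
  replace ((2 * INR m + 2 - (2 * INR m + 3)) ^ 2 + 4 * (c2 * (2 * INR m + 2)) ^ 2)
    with (4 * c ^ 2 * (2 * (INR m + 1 + 1) - 2) ^ 2 + 1) by (rewrite Hc; ring).
  split; field.
Qed.

Lemma eigB c2 c z : c2 <> 0 -> c ^ 2 = c2 ^ 2 ->
  (eigenvalue 0 c2 z <-> z = RtoC 1 \/ exists n : nat, (2 <= n)%nat /\ (z = RtoC (tlamp c n) \/ z = RtoC (tlamm c n))).
Proof.
  intros H2 Hc. split.
  - intros He. destruct (eig_fwd 0 c2 z (blocksB c2 H2) He) as [[a [HL [HR [Hb Hz]]]] | [H0 Hz]].
    + right. destruct (lamB_ne c2 a Hb) as [m ->]. exists (S (S m)). split; [lia|].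
      destruct (muB c2 c m Hc) as [E1 E2]. rewrite <- E1, <- E2. auto.
    + left; auto.
  - intros [Hz | [n [Hn Hz]]].
    + subst. apply L_sing. replace 0%nat with (2 * 0)%nat by lia. rewrite lam_even. ring.
    + destruct n as [|[|m]]; [lia|lia|].
      destruct (blocksB c2 H2 (S (2 * m))) as [[a [Ha [HL [HR Hb]]]] | [E _]]; [|lia].
      assert (a = S (2 * m)).
      { destruct Ha as [Ha|Ha]; auto. exfalso. destruct (lamB_ne c2 a Hb) as [m' ->]. lia. }
      subst a. destruct (mu_eig 0 c2 _ HL HR Hb) as [E1 E2].
      destruct (muB c2 c m Hc) as [F1 F2]. rewrite F1 in E1. rewrite F2 in E2.
      destruct Hz as [->| ->]; auto.
Qed.

Lemma sqrt_lo T : 0 <= T -> T <= sqrt (T ^ 2 + 1).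
Proof.
  intros H. rewrite <- (sqrt_pow2 T H) at 1. apply sqrt_le_1_alt. lra.
Qed.

Lemma sqrt_hi T : 0 <= T -> sqrt (T ^ 2 + 1) <= T + 1.
Proof.
  intros H. rewrite <- (sqrt_pow2 (T + 1)) by lra. apply sqrt_le_1_alt. nra.
Qed.

Lemma sqrt_sq T : sqrt (T ^ 2 + 1) * sqrt (T ^ 2 + 1) = T ^ 2 + 1.
Proof. apply sqrt_sqrt. generalize (pow2_ge_0 T); lra. Qed.

Lemma second_order c X T S : 0 < c -> 1 <= X -> 2 * c * X <= T -> 0 <= S -> S * S = T ^ 2 + 1 ->
  Rabs (4 * T - 16 * c * X) <= 16 * c ->
  Rabs ((T - S) / 2 + 1 / (16 * c * X)) <= (16 * c + 1 / (2 * c)) / (128 * c ^ 2) * Rabs (1 / X ^ 2).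
Proof.
  intros Hc HX HT HS HSS HA.
  assert (HT0 : 0 < T) by nra.
  set (Y := S + T).
  assert (HY : 2 * T <= Y) by (unfold Y; nra).
  assert (HY0 : 0 < Y) by lra.
  assert (E1 : S - T = / Y).
  { unfold Y. field_simplify_eq; [|lra]. nra. }
  assert (ED : (T - S) / 2 + 1 / (16 * c * X) = (2 * Y - 16 * c * X) / (32 * c * X * Y)).
  { replace (T - S) with (- / Y) by lra. field. repeat split; lra. }
  rewrite ED.
  assert (EN : 2 * Y - 16 * c * X = 4 * T - 16 * c * X + 2 / Y).
  { unfold Rdiv. rewrite <- E1. unfold Y. ring. }
  assert (Hinv : 0 < 2 / Y <= 1 / (2 * c)).
  { split. apply Rdiv_lt_0_compat; lra.
    replace (1 / (2 * c)) with (2 * / (4 * c)) by (field; lra).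
    unfold Rdiv. apply Rmult_le_compat_l; [lra|]. apply Rinv_le_contravar; nra. }
  assert (HN : Rabs (2 * Y - 16 * c * X) <= 16 * c + 1 / (2 * c)).
  { rewrite EN. eapply Rle_trans; [apply Rabs_triang|]. rewrite (Rabs_pos_eq (2 / Y)) by lra. lra. }
  assert (HX2 : 0 < X ^ 2) by nra.
  rewrite Rabs_pos_eq with (x := 1 / X ^ 2) by (apply Rlt_le, Rdiv_lt_0_compat; lra).
  unfold Rdiv at 1. rewrite Rabs_mult. rewrite (Rabs_pos_eq (/ (32 * c * X * Y))) by
      (apply Rlt_le, Rinv_0_lt_compat; repeat apply Rmult_lt_0_compat; lra).
  apply Rle_trans with ((16 * c + 1 / (2 * c)) * / (32 * c * X * Y)).
  - apply Rmult_le_compat_r; auto. apply Rlt_le, Rinv_0_lt_compat; repeat apply Rmult_lt_0_compat; lra.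
  - assert (0 < 16 * c + 1 / (2 * c)) by (assert (0 < 1 / (2 * c)) by (apply Rdiv_lt_0_compat; lra); lra).
    replace ((16 * c + 1 / (2 * c)) / (128 * c ^ 2) * (1 / X ^ 2)) with
      ((16 * c + 1 / (2 * c)) * / (128 * c ^ 2 * X ^ 2)) by (field; lra).
    apply Rmult_le_compat_l; [lra|].
    apply Rinv_le_contravar.
    + apply Rmult_lt_0_compat; [|auto]. assert (0 < c^2) by (apply pow_lt; lra). lra.
    + assert (4 * c * X <= Y) by lra. assert (0 < 32 * c * X) by nra.
      assert (32 * c * X * (Y - 4 * c * X) >= 0) by (apply Rle_ge, Rmult_le_pos; lra).
      replace (128 * c ^ 2 * X ^ 2) with (32 * c * X * (4 * c * X)) by ring. nra.
Qed.

Lemma INR_ge1 n : (1 <= n)%nat -> 1 <= INR n.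
Proof. intros H. apply (le_INR 1) in H. simpl in H. lra. Qed.

Lemma bigO_lamp c : 0 < c -> bigO_seq (lamp c) (fun n => 2 * (1 + c) * INR n) (fun _ => 1).
Proof.
  intros Hc. exists (1 + c), 1%nat. intros n Hn. assert (HX := INR_ge1 n Hn).
  unfold lamp. set (X := INR n) in *.
  replace (4 * c ^ 2 * (2 * X - 1) ^ 2 + 1) with ((2 * c * (2 * X - 1)) ^ 2 + 1) by ring.
  assert (HT : 0 <= 2 * c * (2 * X - 1)) by nra.
  assert (L := sqrt_lo _ HT). assert (U := sqrt_hi _ HT).
  set (S := sqrt ((2 * c * (2 * X - 1)) ^ 2 + 1)) in *.
  rewrite Rabs_R1, Rmult_1_r. apply Rabs_le. split; lra.
Qed.

Lemma bigO_tlamp c : 0 < c -> bigO_seq (tlamp c) (fun n => 2 * (1 + c) * INR n) (fun _ => 1).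
Proof.
  intros Hc. exists (2 + 2 * c), 1%nat. intros n Hn. assert (HX := INR_ge1 n Hn).
  unfold tlamp. set (X := INR n) in *.
  replace (4 * c ^ 2 * (2 * X - 2) ^ 2 + 1) with ((2 * c * (2 * X - 2)) ^ 2 + 1) by ring.
  assert (HT : 0 <= 2 * c * (2 * X - 2)) by nra.
  assert (L := sqrt_lo _ HT). assert (U := sqrt_hi _ HT).
  set (S := sqrt ((2 * c * (2 * X - 2)) ^ 2 + 1)) in *.
  rewrite Rabs_R1, Rmult_1_r. apply Rabs_le. split; lra.
Qed.

Lemma bigO_lamm c : 0 < c -> bigO_seq (lamm c)
    (fun n => 2 * (1 - c) * INR n + (c - 1/2) - 1 / (16 * c * INR n))
    (fun n => 1 / (INR n) ^ 2).
Proof.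
  intros Hc. exists ((16 * c + 1 / (2 * c)) / (128 * c ^ 2)), 1%nat. intros n Hn.
  assert (HX := INR_ge1 n Hn).
  unfold lamm. set (X := INR n) in *.
  replace (4 * c ^ 2 * (2 * X - 1) ^ 2 + 1) with ((2 * c * (2 * X - 1)) ^ 2 + 1) by ring.
  assert (E := sqrt_sq (2 * c * (2 * X - 1))).
  assert (P := sqrt_pos ((2 * c * (2 * X - 1)) ^ 2 + 1)).
  set (S := sqrt ((2 * c * (2 * X - 1)) ^ 2 + 1)) in *.
  replace ((4 * X - 1 - S) / 2 - (2 * (1 - c) * X + (c - 1 / 2) - 1 / (16 * c * X)))
    with ((2 * c * (2 * X - 1) - S) / 2 + 1 / (16 * c * X)) by (field; lra).
  apply second_order; auto; try nra.
  replace (4 * (2 * c * (2 * X - 1)) - 16 * c * X) with (- (8 * c)) by ring.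
  rewrite Rabs_Ropp, Rabs_pos_eq; lra.
Qed.

Lemma bigO_tlamm c : 0 < c -> bigO_seq (tlamm c)
    (fun n => 2 * (1 - c) * INR n + (2 * c - 3/2) - 1 / (16 * c * INR n))
    (fun n => 1 / (INR n) ^ 2).
Proof.
  intros Hc. exists ((16 * c + 1 / (2 * c)) / (128 * c ^ 2)), 2%nat. intros n Hn.
  assert (HX : 2 <= INR n) by (apply (le_INR 2) in Hn; simpl in Hn; lra).
  unfold tlamm. set (X := INR n) in *.
  replace (4 * c ^ 2 * (2 * X - 2) ^ 2 + 1) with ((2 * c * (2 * X - 2)) ^ 2 + 1) by ring.
  assert (E := sqrt_sq (2 * c * (2 * X - 2))).
  assert (P := sqrt_pos ((2 * c * (2 * X - 2)) ^ 2 + 1)).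
  set (S := sqrt ((2 * c * (2 * X - 2)) ^ 2 + 1)) in *.
  replace ((4 * X - 3 - S) / 2 - (2 * (1 - c) * X + (2 * c - 3 / 2) - 1 / (16 * c * X)))
    with ((2 * c * (2 * X - 2) - S) / 2 + 1 / (16 * c * X)) by (field; lra).
  apply second_order; auto; try nra.
  replace (4 * (2 * c * (2 * X - 2)) - 16 * c * X) with (- (16 * c)) by ring.
  rewrite Rabs_Ropp, Rabs_pos_eq; lra.
Qed.

Theorem theorem5 (c1 c2 : R) (hprod : c1 * c2 = 0)
  (hc : Rmax (Rabs c1) (Rabs c2) <> 0) :
  let c := Rmax (Rabs c1) (Rabs c2) in
  (forall z : C, spectrum c1 c2 z <-> closureC (eigenvalue c1 c2) z) /\
  (c1 <> 0 /\ c2 = 0 ->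
     forall z : C, eigenvalue c1 c2 z <->
       exists n : nat, (1 <= n)%nat /\
         (z = RtoC (lamp c n) \/ z = RtoC (lamm c n))) /\
  (c1 = 0 /\ c2 <> 0 ->
     forall z : C, eigenvalue c1 c2 z <->
       z = RtoC 1 \/ exists n : nat, (2 <= n)%nat /\
         (z = RtoC (tlamp c n) \/ z = RtoC (tlamm c n))) /\
  bigO_seq (lamp c) (fun n => 2 * (1 + c) * INR n) (fun _ => 1) /\
  bigO_seq (tlamp c) (fun n => 2 * (1 + c) * INR n) (fun _ => 1) /\
  bigO_seq (lamm c)
    (fun n => 2 * (1 - c) * INR n + (c - 1/2) - 1 / (16 * c * INR n))
    (fun n => 1 / (INR n) ^ 2) /\
  bigO_seq (tlamm c)
    (fun n => 2 * (1 - c) * INR n + (2 * c - 3/2) - 1 / (16 * c * INR n))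
    (fun n => 1 / (INR n) ^ 2).
Proof.
  intros c.
  assert (Hc0 : 0 < c).
  { unfold c. generalize (Rabs_pos c1) (Rmax_l (Rabs c1) (Rabs c2)). fold c in hc |- *. intros. lra. }
  assert (HA : c2 = 0 -> c ^ 2 = c1 ^ 2).
  { intros ->. unfold c. rewrite Rabs_R0. rewrite Rmax_left by apply Rabs_pos.
    rewrite <- Rsqr_pow2, <- Rsqr_pow2. symmetry. apply Rsqr_abs. }
  assert (HB : c1 = 0 -> c ^ 2 = c2 ^ 2).
  { intros ->. unfold c. rewrite Rabs_R0. rewrite Rmax_right by apply Rabs_pos.
    rewrite <- Rsqr_pow2, <- Rsqr_pow2. symmetry. apply Rsqr_abs. }
  assert (Hbl : Blocks c1 c2).
  { destruct (Req_dec c1 0) as [E1|E1].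
    - subst c1. destruct (Req_dec c2 0) as [E2|E2].
      + exfalso. apply hc. subst. rewrite Rabs_R0. unfold Rmax. destruct (Rle_dec 0 0); auto.
      + apply blocksB; auto.
    - assert (c2 = 0) by (apply Rmult_integral in hprod; destruct hprod; [contradiction|auto]).
      subst c2. apply blocksA; auto. }
  split; [apply spec_iff; auto|].
  split.
  { intros [H1 ->] z. apply eigA; auto. }
  split.
  { intros [-> H2] z. apply eigB; auto. }
  split; [apply bigO_lamp; auto|].
  split; [apply bigO_tlamp; auto|].
  split; [apply bigO_lamm; auto|].
  apply bigO_tlamm; auto.
Qed.
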